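(* Let $G$ be a graph with no isolated vertices. Then $b_{tR}(G)=1$ if and only if $G$ has an edge $uv$ such that $G-uv$ has no isolated vertices and every $\gamma_{tR}(G)$-function $f=(V_0,V_1,V_2)$ satisfies (i) $G[V_1\cup V_2]-uv$ has an isolated vertex, or (ii) $u\in V_2$ and $v\in \mathrm{epn}(u,V_2)\cap V_0$, or $v\in V_2$ and $u\in\mathrm{epn}(v,V_2)\cap V_0$.
   Context: A TRDF on $G=(V,E)$ is a function $f:V\to\{0,1,2\}$ such that every $v$ with $f(v)=0$ has a neighbor $u$ with $f(u)=2$ and the subgraph induced by $\{v:f(v)>0\}$ has no isolated vertices; $\gamma_{tR}(G)$ is its minimum weight and a $\gamma_{tR}(G)$-function is a TRDF of that weight. A function $f$ is identified with the partition $(V_0,V_1,V_2)$ where $V_i=\{v:f(v)=i\}$. $b_{tR}(G)$ is the minimum $|E'|$ such that $G-E'$ has no isolated vertices and $\gamma_{tR}(G-E')>\gamma_{tR}(G)$ ($\infty$ if none). For $S\subseteq V$ and $v\in S$, $\mathrm{epn}(v,S)=\{w\in V\setminus S: N(w)\cap S=\{v\}\}$. $G[X]$ is the induced subgraph. *)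

(* Defs.v *)
From mathcomp Require Import all_boot.
Set Implicit Arguments. Unset Strict Implicit. Unset Printing Implicit Defensive.

Section Defs.
Variable T : finType.

Definition simple_graph (g : rel T) : Prop := symmetric g /\ irreflexive g.

Definition isolated (g : rel T) (v : T) : bool := [forall u, ~~ g v u].
Definition no_isolated (g : rel T) : bool := [forall v, ~~ isolated g v].

Definition edges (g : rel T) : {set {set T}} :=
  [set [set p.1; p.2] | p in [set p : T * T | g p.1 p.2]].

Definition del_edges (g : rel T) (E' : {set {set T}}) : rel T :=
  fun x y => g x y && ([set x; y] \notin E').

Definition del_edge (g : rel T) (u v : T) : rel T := del_edges g [set [set u; v]].

Definition Vi (f : {ffun T -> 'I_3}) (i : nat) : {set T} := [set x | f x == i :> nat].

Definition weight (f : {ffun T -> 'I_3}) : nat := \sum_(v : T) (f v : nat).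

Definition isTRDF (g : rel T) (f : {ffun T -> 'I_3}) : bool :=
  [forall v, (f v == 0 :> nat) ==> [exists u, g v u && (f u == 2 :> nat)]] &&
  [forall v, (0 < f v) ==> [exists u, g v u && (0 < f u)]].

(* gamma_tR(G): minimum weight of a TRDF (when none exists, the default
   2 * #|T| is returned; this case never arises for graphs without isolated
   vertices, where the constant-2 function is a TRDF). *)
Definition gamma_tR (g : rel T) : nat :=
  \big[minn/(2 * #|T|)%N]_(f : {ffun T -> 'I_3} | isTRDF g f) weight f.

Definition gamma_tR_function (g : rel T) (f : {ffun T -> 'I_3}) : bool :=
  isTRDF g f && (weight f == gamma_tR g).

Definition bondage_set (g : rel T) (E' : {set {set T}}) : bool :=
  [&& E' \subset edges g, no_isolated (del_edges g E') &
      gamma_tR g < gamma_tR (del_edges g E')].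

(* b_tR(G) : None encodes infinity *)
Definition b_tR (g : rel T) : option nat :=
  if [exists E', bondage_set g E'] then
    Some (\big[minn/#|{set {set T}}|]_(E' | bondage_set g E') #|E'|)
  else None.

Definition epn (g : rel T) (v : T) (S : {set T}) : {set T} :=
  [set w | (w \notin S) && ([set x | g w x] :&: S == [set v])].

End Defs.

(* Main.v *)
Require Import Defs.
From mathcomp Require Import all_boot.
Set Implicit Arguments. Unset Strict Implicit.
Section S.
Variable T : finType.
Implicit Types (g h : rel T) (f : {ffun T -> 'I_3}).

Lemma weight_le f : weight f <= 2 * #|T|.
Proof.
rewrite /weight.
have -> : 2 * #|T| = \sum_(v : T) 2 by rewrite sum_nat_const mulnC.
by apply: leq_sum => v _; rewrite -ltnS ltn_ord.
Qed.

Lemma gamma_le_def g : gamma_tR g <= 2 * #|T|.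
Proof.
rewrite /gamma_tR; apply: (big_ind (fun x => x <= 2 * #|T|)) => //.
  by move=> x y hx _; rewrite geq_min hx.
by move=> f _; apply: weight_le.
Qed.

Lemma gamma_le g f : isTRDF g f -> gamma_tR g <= weight f.
Proof.
move=> H; rewrite /gamma_tR unlock /reducebig.
have : f \in index_enum {ffun T -> 'I_3} by rewrite mem_index_enum.
elim: (index_enum _) => //= a r IH; rewrite inE => /orP[/eqP<-|/IH Hr].
  by rewrite H geq_minl.
case: ifP => // _; by rewrite geq_min Hr orbT.
Qed.

Lemma gamma_ge g n : n <= 2 * #|T| -> (forall f, isTRDF g f -> n <= weight f) -> n <= gamma_tR g.
Proof.
move=> H1 H2; rewrite /gamma_tR; apply: (big_ind (fun x => n <= x)) => //.
by move=> x y hx hy; rewrite leq_min hx.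
Qed.

Lemma gamma_att g f0 : isTRDF g f0 -> exists f, isTRDF g f /\ weight f = gamma_tR g.
Proof.
move=> H0.
case: (arg_minnP (fun f => weight f) H0) => f Hf Hmin.
exists f; split => //; apply/eqP; rewrite eqn_leq gamma_ge ?weight_le //= ?andbT.
  by apply: gamma_le.
Qed.

Lemma trdf_mono g h f : (forall x y, h x y -> g x y) -> isTRDF h f -> isTRDF g f.
Proof.
move=> Hs /andP[/forallP H1 /forallP H2]; apply/andP; split; apply/forallP => x.
  apply/implyP => /(implyP (H1 x)) /existsP [y /andP[a b]]; apply/existsP; exists y; by rewrite b Hs.
apply/implyP => /(implyP (H2 x)) /existsP [y /andP[a b]]; apply/existsP; exists y; by rewrite b Hs.
Qed.

Lemma gamma_mono g h : (forall x y, h x y -> g x y) -> gamma_tR g <= gamma_tR h.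
Proof.
move=> Hs; apply: gamma_ge; first exact: gamma_le_def.
move=> f Hf; apply: gamma_le; exact: trdf_mono Hf.
Qed.

Lemma set2_eqE (x y u v : T) : x != y ->
  ([set x; y] == [set u; v]) = ((x == u) && (y == v)) || ((x == v) && (y == u)).
Proof.
move=> nxy; apply/eqP/idP.
  move=> E.
  have hx : x \in [set u; v] by rewrite -E set21.
  have hy : y \in [set u; v] by rewrite -E set22.
  move: hx hy nxy; rewrite !inE => /orP[/eqP->|/eqP->] /orP[/eqP->|/eqP->]; rewrite ?eqxx ?orbT //=.
by case/orP => /andP[/eqP-> /eqP->] //; rewrite setUC.
Qed.

Lemma dE g u v x y : del_edge g u v x y = g x y && ([set x; y] != [set u; v]).
Proof. by rewrite /del_edge /del_edges in_set1. Qed.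

Definition P2 (f : {ffun T -> 'I_3}) g a b :=
  f a = 2 :> nat /\ f b = 0 :> nat /\ forall x, g b x -> f x = 2 :> nat -> x = a.

Lemma iiE g u v f : simple_graph g -> g u v ->
  (u \in Vi f 2 /\ v \in epn g u (Vi f 2) :&: Vi f 0) <-> P2 f g u v.
Proof.
move=> [sy ir] guv; split.
  rewrite !inE => [[/eqP fu /andP[/andP[_ /eqP E] /eqP fv]]].
  split=> //; split=> // x gvx fx.
  have : x \in [set x0 | g v x0] :&: [set x0 | f x0 == 2 :> nat] by rewrite !inE gvx fx eqxx.
  by rewrite E inE => /eqP.
move=> [fu [fv H]]; rewrite !inE fu fv eqxx /=; split=> //.
rewrite andbT; apply/eqP; apply/setP => x; rewrite !inE.
apply/andP/eqP.
  by move=> [a /eqP b]; apply: H.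
by move=> ->; rewrite sy guv fu.
Qed.

Lemma A_fail g u v f : simple_graph g -> g u v ->
  [forall x, (f x == 0 :> nat) ==> [exists y, g x y && (f y == 2 :> nat)]] ->
  ~~ [forall x, (f x == 0 :> nat) ==> [exists y, del_edge g u v x y && (f y == 2 :> nat)]]
  <-> P2 f g u v \/ P2 f g v u.
Proof.
move=> [sy ir] guv /forallP HA.
have nuv : u != v by apply/eqP => E; move: guv; rewrite E ir.
split.
  move/forallPn => [v0]; rewrite negb_imply => /andP[/eqP f0 /existsPn Hn].
  move: (HA v0); rewrite f0 eqxx /= => /existsP [y /andP[gy /eqP fy]].
  have ny : v0 != y by apply/eqP => E; move: gy; rewrite E ir.
  move: (Hn y); rewrite dE gy fy eqxx /= andbT negbK set2_eqE //.
  case/orP => /andP[/eqP e1 /eqP e2]; subst v0 y.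
    right; split=> //; split=> // x gx fx.
    have nx : u != x by apply/eqP => E; move: gx; rewrite E ir.
    move: (Hn x); rewrite dE gx fx eqxx /= andbT negbK set2_eqE // eqxx /=.
    by rewrite (negbTE nuv) /= orbF => /eqP.
  left; split=> //; split=> // x gx fx.
  have nx : v != x by apply/eqP => E; move: gx; rewrite E ir.
  move: (Hn x); rewrite dE gx fx eqxx /= andbT negbK set2_eqE // eqxx /=.
  by rewrite eq_sym (negbTE nuv) /= => /eqP.
case=> [[fa [fb H]]|[fa [fb H]]].
  apply/forallPn; exists v; rewrite fb eqxx /=; apply/existsPn => x; rewrite dE.
  apply/negP => /andP[/andP[gx ne] /eqP fx].
  by move: (H x gx fx) ne => ->; rewrite setUC eqxx.
apply/forallPn; exists u; rewrite fb eqxx /=; apply/existsPn => x; rewrite dE.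
apply/negP => /andP[/andP[gx ne] /eqP fx].
by move: (H x gx fx) ne => ->; rewrite eqxx.
Qed.

Lemma B_fail h f :
  ~~ [forall x, (0 < f x) ==> [exists y, h x y && (0 < f y)]] <->
  (exists w, 0 < f w /\ forall x, h w x -> f x = 0 :> nat).
Proof.
split.
  move/forallPn => [w]; rewrite negb_imply => /andP[fw /existsPn Hn].
  exists w; split=> // x hx; move: (Hn x); rewrite hx /= lt0n negbK => /eqP.
  done.
move=> [w [fw H]]; apply/forallPn; exists w; rewrite fw /=; apply/existsPn => x.
by apply/negP => /andP[/H -> ].
Qed.

Lemma local g u v f : simple_graph g -> g u v -> isTRDF g f ->
 ~~ isTRDF (del_edge g u v) f <->
 ((exists w, 0 < f w /\ forall x, del_edge g u v w x -> f x = 0 :> nat)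
   \/ (u \in Vi f 2 /\ v \in epn g u (Vi f 2) :&: Vi f 0)
   \/ (v \in Vi f 2 /\ u \in epn g v (Vi f 2) :&: Vi f 0)).
Proof.
move=> sg guv /andP[HA _].
have gvu : g v u by rewrite (proj1 sg).
rewrite /isTRDF negb_and.
have E1 := A_fail sg guv HA.
have E2 := B_fail (del_edge g u v) f.
have E3 := iiE f sg guv.
have E4 := iiE f sg gvu.
split.
  case/orP => [/E1 [/E3 H|/E4 H]|/E2 H]; tauto.
move=> [/E2 ->|[/E3 H|/E4 H]]; first by rewrite orbT.
  by apply/orP; left; apply/E1; left.
by apply/orP; left; apply/E1; right.
Qed.

Definition f2 : {ffun T -> 'I_3} := [ffun _ => ord_max].

Lemma f2_trdf h : no_isolated h -> isTRDF h f2.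
Proof.
move=> /forallP Hn; apply/andP; split; apply/forallP => x; rewrite ffunE //=.
move: (Hn x); rewrite /isolated negb_forall => /existsP [y]; rewrite negbK => hy.
by apply/existsP; exists y; rewrite hy ffunE.
Qed.

Lemma strict g u v : no_isolated (del_edge g u v) ->
  gamma_tR g < gamma_tR (del_edge g u v) <->
  forall f, gamma_tR_function g f -> ~~ isTRDF (del_edge g u v) f.
Proof.
move=> ni.
have sub : forall x y, del_edge g u v x y -> g x y by move=> x y; rewrite dE => /andP[].
split.
  move=> lt f /andP[_ /eqP w]; apply/negP => tr.
  by move: (gamma_le tr); rewrite w leqNgt lt.
move=> H; rewrite ltn_neqAle gamma_mono // andbT; apply/negP => /eqP E.
case: (gamma_att (f2_trdf ni)) => f [tf wf].
move: (H f); rewrite /gamma_tR_function (trdf_mono sub tf) wf E eqxx tf.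
by move=> /(_ isT).
Qed.

Lemma bigmin_le (I : finType) (P : pred I) (F : I -> nat) d i :
  P i -> \big[minn/d]_(j | P j) F j <= F i.
Proof.
move=> H; rewrite unlock /reducebig.
have : i \in index_enum I by rewrite mem_index_enum.
elim: (index_enum _) => //= a r IH; rewrite inE => /orP[/eqP<-|/IH Hr].
  by rewrite H geq_minl.
case: ifP => // _; by rewrite geq_min Hr orbT.
Qed.

Lemma bigmin_ge (I : finType) (P : pred I) (F : I -> nat) d n :
  n <= d -> (forall i, P i -> n <= F i) -> n <= \big[minn/d]_(j | P j) F j.
Proof.
move=> H1 H2; apply: (big_ind (fun x => n <= x)) => //.
by move=> x y hx hy; rewrite leq_min hx.
Qed.

Lemma bond_pos g E : bondage_set g E -> 0 < #|E|.
Proof.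
move=> /and3P[_ _ lt]; rewrite lt0n; apply/negP => /eqP /cards0_eq E0.
move: lt; rewrite E0 ltnNge gamma_mono //.
by move=> x y gx; rewrite /del_edges in_set0 andbT.
Qed.

Lemma card_big : 2 <= #|{set {set T}}|.
Proof.
have ne : (set0 : {set {set T}}) != setT.
  by apply/eqP => E; move: (in_setT (set0 : {set T})); rewrite -E in_set0.
by move: (max_card [set (set0 : {set {set T}}); setT]); rewrite cards2 ne.
Qed.

Lemma bond1 g :
  b_tR g = Some 1 <-> exists u v, [/\ g u v, no_isolated (del_edge g u v) &
     gamma_tR g < gamma_tR (del_edge g u v)].
Proof.
rewrite /b_tR; case: ifP => [/existsP [E0 hE0]|/negbT/negP nE].
  split.
    move=> [Hm].
    case: (boolP [exists E, bondage_set g E && (#|E| == 1)]).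
      move=> /existsP [E /andP[/and3P[sub ni lt] /cards1P [e Ee]]].
      move: sub; rewrite Ee sub1set => /imsetP [p]; rewrite inE => gp ep.
      exists p.1, p.2; split=> //.
        by move: ni; rewrite Ee ep.
      by move: lt; rewrite Ee ep.
    move=> /existsPn N; exfalso.
    have : 2 <= \big[minn/#|{set {set T}}|]_(E' | bondage_set g E') #|E'|.
      apply: bigmin_ge; first exact: card_big.
      move=> E hE; move: (N E) (bond_pos hE); rewrite hE /=.
      by case: #|E| => [|[|k]].
    by rewrite Hm.
  move=> [u [v [guv ni lt]]].
  have hb : bondage_set g [set [set u; v]].
    apply/and3P; split=> //.
    rewrite sub1set; apply/imsetP; exists (u, v) => //; by rewrite inE.
  congr Some; apply/eqP; rewrite eqn_leq; apply/andP; split.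
    by move: (@bigmin_le _ (bondage_set g) (fun E : {set {set T}} => #|E|) #|{set {set T}}| _ hb); rewrite cards1.
  apply: bigmin_ge; last by move=> E; apply: bond_pos.
  by apply: leq_trans card_big.
split=> // [[u [v [guv ni lt]]]]; exfalso; apply: nE; apply/existsP; exists [set [set u; v]]; apply/and3P; split=> //.
rewrite sub1set; apply/imsetP; exists (u, v) => //; by rewrite inE.
Qed.
End S.
Unset Implicit Arguments.

Theorem mainTheorem13 (T : finType) (g : rel T) :
  simple_graph g -> no_isolated g ->
  b_tR g = Some 1 <->
  exists u v : T,
    [/\ g u v, no_isolated (del_edge g u v) &
     forall f : {ffun T -> 'I_3}, gamma_tR_function g f ->
       (* (i) G[V1 u V2] - uv has an isolated vertex *)
       (exists w, 0 < f w /\ forall x, del_edge g u v w x -> f x = 0 :> nat)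
       \/ (u \in Vi f 2 /\ v \in epn g u (Vi f 2) :&: Vi f 0)
       \/ (v \in Vi f 2 /\ u \in epn g v (Vi f 2) :&: Vi f 0)].
Proof.
move=> sg _; apply: iff_trans (bond1 g) _; split.
  move=> [u [v [guv ni lt]]]; exists u, v; split=> // f hf.
  apply/(local sg guv (proj1 (andP hf))).
  by move/strict: lt => /(_ ni); apply.
move=> [u [v [guv ni H]]]; exists u, v; split=> //.
apply/strict => // f hf; apply/(local sg guv (proj1 (andP hf))); exact: H.
Qed.
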